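(* Let $S\subset\mathbb R^2$ be a finite set of $n>4$ points, none of which lies at the center of SED$(S)$. If $S$ is Pre-regular, then every internal angle of the convex hull of $S$ is strictly greater than $\pi(n-3)/n$.
   Context: SED$(S)$ is the smallest closed disk containing $S$. $S$ is \emph{Pre-regular} if there is a regular $n$-gon $P$ (the supporting polygon) such that for every pair of adjacent edges of $P$, one of the two edges contains exactly two points of $S$ (possibly at its endpoints) and the relative interior of the other edge contains no point of $S$. *)

(* Defs.v *)
From Stdlib Require Import Reals List.
Import ListNotations.
Open Scope R_scope.

Definition pt := (R * R)%type.

Definition padd (a b : pt) : pt := (fst a + fst b, snd a + snd b).
Definition psub (a b : pt) : pt := (fst a - fst b, snd a - snd b).
Definition pscale (t : R) (a : pt) : pt := (t * fst a, t * snd a).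
Definition dot (a b : pt) : R := fst a * fst b + snd a * snd b.
Definition cross (a b : pt) : R := fst a * snd b - snd a * fst b.
Definition norm (a : pt) : R := sqrt (dot a a).
Definition dist (a b : pt) : R := norm (psub a b).

Definition disk_contains (S : list pt) (c : pt) (r : R) : Prop :=
  forall p, In p S -> dist p c <= r.

Definition is_SED (S : list pt) (c : pt) (r : R) : Prop :=
  disk_contains S c r /\
  (forall c' r', disk_contains S c' r' -> r <= r').

Definition on_segment (p a b : pt) : Prop :=
  exists t, 0 <= t <= 1 /\ p = padd a (pscale t (psub b a)).

Definition in_rel_interior (p a b : pt) : Prop :=
  exists t, 0 < t < 1 /\ p = padd a (pscale t (psub b a)).

Definition seg_has_exactly_two (S : list pt) (a b : pt) : Prop :=
  exists p q, p <> q /\ In p S /\ In q S /\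
    on_segment p a b /\ on_segment q a b /\
    (forall x, In x S -> on_segment x a b -> x = p \/ x = q).

Definition seg_interior_empty (S : list pt) (a b : pt) : Prop :=
  forall x, In x S -> ~ in_rel_interior x a b.

Definition reg_vertex (n : nat) (c : pt) (rho theta : R) (k : nat) : pt :=
  (fst c + rho * cos (theta + 2 * PI * INR k / INR n),
   snd c + rho * sin (theta + 2 * PI * INR k / INR n)).

(* S is Pre-regular with a supporting regular n-gon (n = |S|):
   edge k is [v_k, v_{k+1}] (indices mod n); for every pair of adjacent
   edges (k, k+1), one edge contains exactly two points of S and the
   relative interior of the other contains no point of S. *)
Definition pre_regular (n : nat) (S : list pt) : Prop :=
  exists (c : pt) (rho theta : R), 0 < rho /\
    forall k, (k < n)%nat ->
      let v0 := reg_vertex n c rho theta k in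
      let v1 := reg_vertex n c rho theta (k + 1) in
      let v2 := reg_vertex n c rho theta (k + 2) in
      (seg_has_exactly_two S v0 v1 /\ seg_interior_empty S v1 v2) \/
      (seg_has_exactly_two S v1 v2 /\ seg_interior_empty S v0 v1).

Fixpoint wsum (ws : list R) (L : list pt) : pt :=
  match ws, L with
  | w :: ws', p :: L' => padd (pscale w p) (wsum ws' L')
  | _, _ => (0, 0)
  end.

Definition in_conv (L : list pt) (x : pt) : Prop :=
  exists ws : list R, length ws = length L /\
    Forall (fun w => 0 <= w) ws /\ fold_right Rplus 0 ws = 1 /\
    x = wsum ws L.

Definition in_conv_set (P : pt -> Prop) (x : pt) : Prop :=
  exists L : list pt, (forall p, In p L -> P p) /\ in_conv L x.

Definition hull_vertex (S : list pt) (v : pt) : Prop :=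
  In v S /\ ~ in_conv_set (fun p => In p S /\ p <> v) v.

(* u and v are adjacent vertices of the convex polygon conv(S), i.e. [u,v] is
   an edge of conv(S): both are hull vertices, u <> v, and the line uv
   supports S (all of S lies in one closed half-plane bounded by it). *)
Definition hull_adjacent (S : list pt) (u v : pt) : Prop :=
  hull_vertex S u /\ hull_vertex S v /\ u <> v /\
  ((forall p, In p S -> 0 <= cross (psub v u) (psub p u)) \/
   (forall p, In p S -> cross (psub v u) (psub p u) <= 0)).

Definition angle (u v w : pt) : R :=
  acos (dot (psub u v) (psub w v) / (norm (psub u v) * norm (psub w v))).

(* Main.v *)
Require Import Defs.
From Stdlib Require Import Reals List Lra Lia Psatz Classical ClassicalEpsilon.
Import ListNotations.
Open Scope R_scope.

Lemma sqr_nn (x : R) : 0 <= x*x.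
Proof. nra. Qed.

Lemma sq_le_abs (x y : R) : 0 <= y -> x*x <= y*y -> x <= y.
Proof. intros. nra. Qed.

Lemma step1 (a b c d uu ww k : R) :
  0 <= a -> 0 <= b -> 0 <= c -> 0 <= d -> 0 <= uu -> 0 <= ww -> k*k <= uu*ww ->
  0 <= a*c*uu + b*d*ww + (a*d+b*c)*k - k * Rabs (a*d - b*c).
Proof.
  intros Ha Hb Hc Hd Hu Hw Hk.
  assert (key : forall a b c d, 0 <= a -> 0 <= b -> 0 <= c -> 0 <= d -> b*c <= a*d ->
     0 <= a*c*uu + b*d*ww + 2*(b*c)*k).
  { clear a b c d Ha Hb Hc Hd. intros a b c d Ha Hb Hc Hd Hbc.
    destruct (Rle_dec 0 k). { assert (0 <= b*c) by nra. assert (0<= a*c*uu) by (apply Rmult_le_pos; nra).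
      assert (0 <= b*d*ww) by (apply Rmult_le_pos; nra). nra. }
    assert (H1 : 0 <= a*c*uu + b*d*ww).
    { assert (0<= a*c*uu) by (apply Rmult_le_pos; nra). assert (0 <= b*d*ww) by (apply Rmult_le_pos; nra). lra. }
    assert (H2 : (b*c)*(b*c) <= (a*c)*(b*d)).
    { assert (0 <= b*c) by nra. replace ((a*c)*(b*d)) with ((b*c)*(a*d)) by ring. apply Rmult_le_compat_l; lra. }
    assert (H3 : 4*((a*c)*(b*d))*(uu*ww) <= (a*c*uu + b*d*ww)*(a*c*uu + b*d*ww)).
    { pose proof (sqr_nn (a*c*uu - b*d*ww)).
      replace (4*((a*c)*(b*d))*(uu*ww)) with (4*(a*c*uu)*(b*d*ww)) by ring. nra. }
    assert (H4 : (2*(b*c)*(-k))*(2*(b*c)*(-k)) <= (a*c*uu + b*d*ww)*(a*c*uu + b*d*ww)).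
    { pose proof (sqr_nn (b*c)).
      assert ((b*c)*(b*c)*(k*k) <= (a*c)*(b*d)*(uu*ww)).
      { apply Rle_trans with ((a*c)*(b*d)*(k*k)). apply Rmult_le_compat_r; nra.
        apply Rmult_le_compat_l; nra. }
      nra. }
    pose proof (sq_le_abs _ _ H1 H4). lra. }
  destruct (Rle_dec (b*c) (a*d)).
  - rewrite Rabs_right by lra. pose proof (key a b c d Ha Hb Hc Hd r). nra.
  - rewrite Rabs_left by lra. pose proof (key c d a b Hc Hd Ha Hb ltac:(lra)). nra.
Qed.

Lemma final_cases (k P C kap A B : R) : 0 < kap -> 0 <= A -> 0 <= B ->
  A*A = P*P + C*C -> B*B = k*k + kap*kap -> k * Rabs C <= kap * P -> k*A <= P*B.
Proof.
  intros Hk HA HB EA EB H.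
  pose proof (Rabs_pos C) as HC. assert (EC : Rabs C * Rabs C = C*C).
  { rewrite <- Rabs_mult. rewrite Rabs_right; [lra| apply Rle_ge, sqr_nn]. }
  destruct (Rle_dec 0 k).
  - assert (0 <= P) by nra.
    apply sq_le_abs. nra.
    assert (k*k*(C*C) <= P*P*(kap*kap)).
    { rewrite <- EC. assert (0 <= k * Rabs C) by nra.
      replace (k*k*(Rabs C*Rabs C)) with ((k*Rabs C)*(k*Rabs C)) by ring.
      replace (P*P*(kap*kap)) with ((kap*P)*(kap*P)) by ring. nra. }
    replace (k*A*(k*A)) with (k*k*(A*A)) by ring. replace (P*B*(P*B)) with (P*P*(B*B)) by ring.
    rewrite EA, EB. nra.
  - destruct (Rle_dec 0 P). { assert (k*A <= 0) by nra. assert (0 <= P*B) by nra. lra. }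
    assert (P*P*(kap*kap) <= k*k*(C*C)).
    { rewrite <- EC. assert (0 <= - (kap*P)) by nra.
      replace (k*k*(Rabs C*Rabs C)) with ((-k*Rabs C)*(-k*Rabs C)) by ring.
      replace (P*P*(kap*kap)) with ((-(kap*P))*(-(kap*P))) by ring. nra. }
    assert ((-P*B)*(-P*B) <= (-k*A)*(-k*A)).
    { replace ((-k*A)*(-k*A)) with (k*k*(A*A)) by ring. replace ((-P*B)*(-P*B)) with (P*P*(B*B)) by ring.
      rewrite EA, EB. nra. }
    assert (-P*B <= -k*A). { apply sq_le_abs. nra. auto. }
    lra.
Qed.

Lemma dot_nn (X : pt) : 0 <= dot X X.
Proof. destruct X; unfold dot; simpl; nra. Qed.

Lemma norm_mult (X Y : pt) : norm X * norm Y = sqrt (dot X Y * dot X Y + cross X Y * cross X Y).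
Proof.
  unfold norm. rewrite <- sqrt_mult by apply dot_nn. f_equal. destruct X, Y; unfold dot, cross; simpl; ring.
Qed.

Lemma sqrt_sq_id (x : R) : 0 <= x -> sqrt x * sqrt x = x.
Proof. intros; apply sqrt_sqrt; auto. Qed.

Lemma cone_ineq (U W X Y : pt) : 0 < cross U W -> 0 <= cross U X -> 0 <= cross X W ->
  0 <= cross U Y -> 0 <= cross Y W ->
  dot U W * (norm X * norm Y) <= dot X Y * (norm U * norm W).
Proof.
  intros Hk Ha Hb Hc Hd.
  set (kap := cross U W) in *.
  assert (I1 : kap*kap*dot X Y = cross X W * cross Y W * dot U U + cross U X * cross U Y * dot W W
     + (cross X W * cross U Y + cross U X * cross Y W) * dot U W).
  { unfold kap; destruct U, W, X, Y; unfold dot, cross; simpl; ring. }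
  assert (I2 : kap * cross X Y = cross X W * cross U Y - cross U X * cross Y W).
  { unfold kap; destruct U, W, X, Y; unfold dot, cross; simpl; ring. }
  assert (I3 : dot U W * dot U W <= dot U U * dot W W).
  { assert (dot U U * dot W W = dot U W * dot U W + kap*kap) by (unfold kap; destruct U, W; unfold dot, cross; simpl; ring).
    pose proof (sqr_nn kap). lra. }
  pose proof (step1 _ _ _ _ _ _ _ Hb Ha Hd Hc (dot_nn U) (dot_nn W) I3) as S1.
  rewrite <- I1, <- I2 in S1. rewrite Rabs_mult, (Rabs_right kap) in S1 by lra.
  assert (K : dot U W * Rabs (cross X Y) <= kap * dot X Y).
  { apply Rmult_le_reg_l with kap; auto. nra. }
  rewrite (norm_mult X Y), (norm_mult U W).
  apply (final_cases _ _ (cross X Y) kap); auto; try apply sqrt_pos.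
  - apply sqrt_sq_id. pose proof (sqr_nn (dot X Y)); pose proof (sqr_nn (cross X Y)); lra.
  - rewrite sqrt_sq_id. fold kap. ring. pose proof (sqr_nn (dot U W)); pose proof (sqr_nn (cross U W)); lra.
Qed.

Lemma conv2_contra (S : list pt) (z x y : pt) (l : R) :
  hull_vertex S z -> In x S -> In y S -> x <> z -> y <> z -> 0 <= l <= 1 ->
  fst z = l * fst x + (1 - l) * fst y -> snd z = l * snd x + (1 - l) * snd y -> False.
Proof.
  intros [Hz Hn] Hx Hy Hxz Hyz Hl E1 E2. apply Hn.
  exists [x; y]. split.
  - intros p [<-|[<-|[]]]; auto.
  - exists [l; 1 - l]. split; [reflexivity|]. split; [|split].
    + constructor; [lra|constructor; [lra|constructor]].
    + simpl; lra.
    + destruct z, x, y; simpl in *; unfold padd, pscale; simpl. f_equal; lra.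
Qed.

Lemma collinear_contra (S : list pt) (u v w : pt) :
  hull_vertex S u -> hull_vertex S v -> hull_vertex S w -> u <> v -> w <> v -> u <> w ->
  cross (psub u v) (psub w v) = 0 -> False.
Proof.
  intros Hu Hv Hw Huv Hwv Huw Hc.
  destruct u as [u1 u2], v as [v1 v2], w as [w1 w2]. unfold cross, psub in Hc; simpl in Hc.
  set (U1 := u1 - v1) in *. set (U2 := u2 - v2) in *. set (W1 := w1 - v1) in *. set (W2 := w2 - v2) in *.
  assert (HW : 0 < W1*W1 + W2*W2).
  { destruct (Req_dec W1 0); destruct (Req_dec W2 0).
    - exfalso; apply Hwv. unfold W1, W2 in *. f_equal; lra.
    - pose proof (sqr_nn W1). assert (0 < W2*W2) by nra. lra.
    - pose proof (sqr_nn W2). assert (0 < W1*W1) by nra. lra.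
    - pose proof (sqr_nn W2). assert (0 < W1*W1) by nra. lra. }
  set (t := (U1*W1 + U2*W2) / (W1*W1 + W2*W2)).
  assert (E1 : U1 = t * W1).
  { unfold t. apply Rmult_eq_reg_r with (W1*W1+W2*W2); [|lra].
    replace ((U1 * W1 + U2 * W2) / (W1 * W1 + W2 * W2) * W1 * (W1 * W1 + W2 * W2)) with ((U1 * W1 + U2 * W2)*W1) by (field; lra).
    replace (U1 * (W1 * W1 + W2 * W2)) with ((U1 * W1 + U2 * W2)*W1 + W2*(U1*W2 - U2*W1)) by ring.
    rewrite Hc; ring. }
  assert (E2 : U2 = t * W2).
  { unfold t. apply Rmult_eq_reg_r with (W1*W1+W2*W2); [|lra].
    replace ((U1 * W1 + U2 * W2) / (W1 * W1 + W2 * W2) * W2 * (W1 * W1 + W2 * W2)) with ((U1 * W1 + U2 * W2)*W2) by (field; lra).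
    replace (U2 * (W1 * W1 + W2 * W2)) with ((U1 * W1 + U2 * W2)*W2 - W1*(U1*W2 - U2*W1)) by ring.
    rewrite Hc; ring. }
  destruct (Rtotal_order t 0) as [Ht|[Ht|Ht]].
  -
    apply (conv2_contra S (v1,v2) (u1,u2) (w1,w2) (1/(1-t))); auto.
    + apply Hu.
    + apply Hw.
    + split. apply Rlt_le, Rdiv_lt_0_compat; lra. apply Rmult_le_reg_l with (1 - t); [lra|]. field_simplify; lra.
    + simpl. unfold U1, W1 in E1. field_simplify_eq; [|lra]. nra.
    + simpl. unfold U2, W2 in E2. field_simplify_eq; [|lra]. nra.
  - apply Huv. unfold U1, U2 in *. rewrite Ht in *. f_equal; lra.
  - destruct (Rle_dec t 1).
    + apply (conv2_contra S (u1,u2) (v1,v2) (w1,w2) (1-t)); auto.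
      * apply Hv.
      * apply Hw.
      * lra.
      * simpl. unfold U1, W1 in E1. nra.
      * simpl. unfold U2, W2 in E2. nra.
    + apply (conv2_contra S (w1,w2) (v1,v2) (u1,u2) (1 - 1/t)); auto.
      * apply Hv.
      * apply Hu.
      * split. assert (1/t < 1). { apply Rmult_lt_reg_l with t; [lra|]. field_simplify; lra. }
        assert (0 < 1/t) by (apply Rdiv_lt_0_compat; lra). lra.
        assert (0 < 1/t) by (apply Rdiv_lt_0_compat; lra). lra.
      * simpl. unfold U1, W1 in E1. field_simplify_eq; [|lra]. nra.
      * simpl. unfold U2, W2 in E2. field_simplify_eq; [|lra]. nra.
Qed.

Lemma cross_uv (u v p : pt) : cross (psub v u) (psub p u) = - cross (psub u v) (psub p v).
Proof. destruct u, v, p; unfold cross, psub; simpl; ring. Qed.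

Lemma wedge (S : list pt) (u v w x y : pt) :
  hull_adjacent S u v -> hull_adjacent S v w -> u <> w -> In x S -> In y S ->
  dot (psub u v) (psub w v) * (norm (psub x v) * norm (psub y v))
   <= dot (psub x v) (psub y v) * (norm (psub u v) * norm (psub w v)).
Proof.
  intros [Hu [Hv [Huv C1]]] [_ [Hw [Hvw C2]]] Huw Hx Hy.
  assert (Hwi : In w S) by apply Hw. assert (Hui : In u S) by apply Hu.
  set (kap := cross (psub u v) (psub w v)).
  destruct (Rtotal_order kap 0) as [Hk|[Hk|Hk]].
  -
    assert (A : forall p, In p S -> cross (psub u v) (psub p v) <= 0).
    { destruct C1 as [C1|C1].
      - intros p Hp. specialize (C1 p Hp). rewrite cross_uv in C1. lra.
      - exfalso. specialize (C1 w Hwi). rewrite cross_uv in C1. fold kap in C1. lra. }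
    assert (B : forall p, In p S -> 0 <= cross (psub w v) (psub p v)).
    { destruct C2 as [C2|C2]; auto.
      exfalso. specialize (C2 u Hui).
      assert (cross (psub w v) (psub u v) = - kap) by (unfold kap; destruct u, v, w; unfold cross, psub; simpl; ring).
      lra. }
    assert (Hc : forall p q, cross p q = - cross q p) by (intros [] []; unfold cross; simpl; ring).
    pose proof (cone_ineq (psub w v) (psub u v) (psub x v) (psub y v)) as K.
    rewrite (Hc (psub w v)) in K. fold kap in K.
    assert (dot (psub w v) (psub u v) = dot (psub u v) (psub w v)) by (unfold dot; ring).
    rewrite H in K. rewrite (Rmult_comm (norm (psub w v))) in K.
    apply K; try lra; auto.
    + rewrite Hc. specialize (A x Hx). lra.
    + rewrite Hc. specialize (A y Hy). lra.
  - exfalso. apply (collinear_contra S u v w); auto.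
  - assert (A : forall p, In p S -> 0 <= cross (psub u v) (psub p v)).
    { destruct C1 as [C1|C1].
      - exfalso. specialize (C1 w Hwi). rewrite cross_uv in C1. fold kap in C1. lra.
      - intros p Hp. specialize (C1 p Hp). rewrite cross_uv in C1. lra. }
    assert (B : forall p, In p S -> cross (psub w v) (psub p v) <= 0).
    { destruct C2 as [C2|C2]; auto.
      exfalso. specialize (C2 u Hui).
      assert (cross (psub w v) (psub u v) = - kap) by (unfold kap; destruct u, v, w; unfold cross, psub; simpl; ring).
      lra. }
    assert (Hc : forall p q, cross p q = - cross q p) by (intros [] []; unfold cross; simpl; ring).
    apply cone_ineq; auto.
    + rewrite Hc. specialize (B x Hx). lra.
    + rewrite Hc. specialize (B y Hy). lra.
Qed.

Lemma acos_gt (z al : R) : 0 <= al < PI -> z < cos al -> al < acos z.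
Proof.
  intros Hal Hz. destruct (Rle_dec z (-1)).
  - unfold acos. destruct (Rle_dec z (-1)); [lra|contradiction].
  - pose proof (COS_bound al). pose proof (acos_bound z).
    destruct (Rlt_le_dec al (acos z)); auto. exfalso.
    assert (E : cos (acos z) = z) by (apply cos_acos; lra).
    destruct (Req_dec (acos z) al).
    + rewrite H1 in E. lra.
    + assert (cos al < cos (acos z)) by (apply cos_decreasing_1; lra). lra.
Qed.

Lemma abs_dot_le (P B : pt) : Rabs (dot P B) <= norm P * norm B.
Proof.
  rewrite norm_mult. rewrite <- sqrt_Rsqr_abs. apply sqrt_le_1_alt. unfold Rsqr.
  pose proof (sqr_nn (cross P B)). lra.
Qed.

Lemma norm_pos (X : pt) : X <> (0,0) -> 0 < norm X.
Proof.
  intros H. unfold norm. apply sqrt_lt_R0. destruct X as [x y]. unfold dot; simpl.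
  destruct (Req_dec x 0); destruct (Req_dec y 0).
  - subst; contradiction.
  - assert (0 < y*y) by nra. nra.
  - assert (0 < x*x) by nra. nra.
  - assert (0 < x*x) by nra. nra.
Qed.

Lemma psub_neq (a b : pt) : a <> b -> psub a b <> (0,0).
Proof.
  intros H E. apply H. destruct a, b; unfold psub in E; simpl in E. injection E; intros. f_equal; lra.
Qed.

Lemma combine (U W P B : pt) (c : R) : U <> (0,0) -> W <> (0,0) ->
  dot U W * (norm P * norm B) <= dot P B * (norm U * norm W) ->
  dot P B < - c * (norm P * norm B) ->
  dot U W / (norm U * norm W) < - c.
Proof.
  intros HU HW H1 H2.
  pose proof (norm_pos U HU). pose proof (norm_pos W HW).
  pose proof (abs_dot_le P B).
  assert (HPB : 0 < norm P * norm B).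
  { destruct (Rle_lt_dec (norm P * norm B) 0); auto. exfalso.
    pose proof (Rabs_pos (dot P B)). assert (dot P B = 0).
    { destruct (Req_dec (dot P B) 0); auto. pose proof (Rabs_pos_lt _ H5). lra. }
    rewrite H5 in H2. assert (norm P * norm B = 0) by lra. rewrite H6 in H2. lra. }
  assert (0 < norm U * norm W) by (apply Rmult_lt_0_compat; auto).
  apply Rmult_lt_reg_r with (norm U * norm W); auto.
  unfold Rdiv. rewrite Rmult_assoc, Rinv_l by lra. rewrite Rmult_1_r.
  apply Rmult_lt_reg_r with (norm P * norm B); auto.
  apply Rle_lt_trans with (dot P B * (norm U * norm W)); auto.
  nra.
Qed.
Lemma sqr_nn2 (x : R) : 0 <= x*x.
Proof. nra. Qed.

Lemma sq_lt (A B : R) : 0 <= A -> 0 <= B -> A*A < B*B -> A < B.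
Proof. intros. destruct (Rlt_le_dec A B); auto. assert (B*B <= A*A) by (apply Rmult_le_compat; lra). lra. Qed.

Lemma angle_ineq (X Y c s : R) : 0 <= Y -> 0 < s -> c*c + s*s = 1 -> 0 < X * s - Y * c ->
  c * sqrt (X*X + Y*Y) < X.
Proof.
  intros HY Hs Hcs Hf.
  set (r := sqrt (X*X+Y*Y)).
  assert (Hr : r*r = X*X+Y*Y) by (apply sqrt_sqrt; nra).
  assert (Hr0 : 0 <= r) by apply sqrt_pos.
  destruct (Rle_dec 0 c).
  - assert (HX : 0 < X) by nra.
    assert ((c*r)*(c*r) < X*X).
    { replace ((c*r)*(c*r)) with (c*c*(X*X+Y*Y)) by (rewrite <- Hr; ring).
      assert (c*Y < s*X) by lra. assert (0 <= c*Y) by nra.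
      assert ((c*Y)*(c*Y) < (s*X)*(s*X)) by nra. nra. }
    assert (0 <= c*r) by nra. nra.
  - destruct (Rle_dec 0 X).
    + assert (0 < r).
      { destruct (Req_dec X 0). subst X. assert (0 < Y) by nra. 
        unfold r. apply sqrt_lt_R0. nra. unfold r. apply sqrt_lt_R0. nra. }
      nra.
    + assert ((-X)*(-X) < (c*r)*(c*r)).
      { replace ((c*r)*(c*r)) with (c*c*(X*X+Y*Y)) by (rewrite <- Hr; ring).
        assert (s*(-X) < (-c)*Y) by lra. assert (0 <= s*(-X)) by nra.
        assert ((s*(-X))*(s*(-X)) < ((-c)*Y)*((-c)*Y)) by nra. nra. }
      assert (0 <= -(c*r)) by nra.
      assert (-X < -(c*r)) by (apply sq_lt; nra). lra.
Qed.

Section Frame.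
Variable n : nat.
Hypothesis Hn : (4 < n)%nat.

Definition aa := PI / INR n.

Lemma INRn_pos : 5 <= INR n.
Proof. replace 5 with (INR 5) by (simpl; lra). apply le_INR. lia. Qed.

Lemma aa_bounds : 0 < aa /\ aa <= PI / 5.
Proof.
  pose proof INRn_pos. pose proof PI_RGT_0. unfold aa. split.
  - apply Rdiv_lt_0_compat; lra.
  - unfold Rdiv. apply Rmult_le_compat_l; [lra|]. apply Rinv_le_contravar; lra.
Qed.

Lemma trig_facts :
  0 < sin aa /\ 0 < sin (3*aa) /\ cos (4*aa) < cos (2*aa) /\ cos (2*aa) < 1 /\
  cos (3*aa) <= cos aa /\ cos (5*aa) <= cos aa.
Proof.
  destruct aa_bounds as [H1 H2]. pose proof PI_RGT_0.
  repeat split.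
  - apply sin_gt_0; lra.
  - apply sin_gt_0; lra.
  - apply cos_decreasing_1; lra.
  - rewrite <- cos_0. apply cos_decreasing_1; lra.
  - left; apply cos_decreasing_1; lra.
  - left; apply cos_decreasing_1; lra.
Qed.

Definition wloc (m : R) : pt := (sin (m * aa), - cos (m * aa)).

Definition gfun (q : pt) : R := fst q * sin (3*aa) - snd q * cos (3*aa).

Lemma g_wloc (m : R) : gfun (wloc m) = cos ((m - 3) * aa).
Proof.
  unfold gfun, wloc; simpl. replace ((m-3)*aa) with (m*aa - 3*aa) by ring. rewrite cos_minus. ring.
Qed.

Lemma g_aff (y z : pt) (t : R) : gfun (padd y (pscale t (psub z y))) = gfun y + t * (gfun z - gfun y).
Proof. destruct y, z; unfold gfun, padd, pscale, psub; simpl; ring. Qed.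

Lemma core (s s' t : R) (b : pt) :
  0 < s <= 1 -> s' < s -> 0 <= t <= 1 ->
  ((b = padd (wloc 1) (pscale t (psub (wloc 3) (wloc 1))) /\ (s < 1 \/ 0 < t)) \/
   (b = padd (wloc 3) (pscale t (psub (wloc 5) (wloc 3))) /\ (s < 1 \/ t < 1))) ->
  let v := padd (wloc (-1)) (pscale s (psub (wloc 1) (wloc (-1)))) in
  let p := padd (wloc (-1)) (pscale s' (psub (wloc 1) (wloc (-1)))) in
  dot (psub p v) (psub b v) < - cos (3*aa) * (norm (psub p v) * norm (psub b v)).
Proof.
  intros Hs Hs' Ht Hb v p.
  destruct trig_facts as [T1 [T2 [T3 [T4 [T5 T6]]]]].
  assert (Ew0 : wloc (-1) = (- sin aa, - cos aa)).
  { unfold wloc. replace (-1*aa) with (-aa) by ring. rewrite sin_neg, cos_neg. reflexivity. }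
  assert (Ew1 : wloc 1 = (sin aa, - cos aa)) by (unfold wloc; rewrite Rmult_1_l; reflexivity).
  assert (Gv : gfun v = cos (4*aa) + s * (cos (2*aa) - cos (4*aa))).
  { unfold v. rewrite g_aff, !g_wloc. replace ((-1-3)*aa) with (-(4*aa)) by ring.
    replace ((1-3)*aa) with (-(2*aa)) by ring. rewrite !cos_neg. ring. }
  assert (Gb : gfun b - cos (2*aa) > 0 \/ s < 1 /\ gfun b - cos (2*aa) >= 0).
  { destruct Hb as [[-> H]|[-> H]]; rewrite g_aff, !g_wloc;
    replace ((1-3)*aa) with (-(2*aa)) by ring; replace ((3-3)*aa) with 0 by ring;
    replace ((5-3)*aa) with (2*aa) by ring; rewrite ?cos_neg, cos_0.
    - destruct H; [right; split; [auto| nra] | left; nra].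
    - destruct H; [right; split; [auto| nra] | left; nra]. }
  assert (Yb : snd b >= - cos aa).
  { destruct Hb as [[-> _]|[-> _]]; unfold padd, pscale, psub, wloc; simpl;
    rewrite ?Rmult_1_l; nra. }
  assert (Ev : v = (- sin aa + s * (2 * sin aa), - cos aa)).
  { unfold v. rewrite Ew0, Ew1. unfold padd, pscale, psub; simpl. f_equal; ring. }
  assert (Ep : p = (- sin aa + s' * (2 * sin aa), - cos aa)).
  { unfold p. rewrite Ew0, Ew1. unfold padd, pscale, psub; simpl. f_equal; ring. }
  assert (Hf : 0 < (fst b - fst v) * sin (3*aa) - (snd b - snd v) * cos (3*aa)).
  { assert (gfun b - gfun v = (fst b - fst v) * sin (3*aa) - (snd b - snd v) * cos (3*aa))
      by (unfold gfun; ring).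
    rewrite <- H. rewrite Gv. destruct Gb as [G|[G1 G2]]; nra. }
  set (X := fst b - fst v) in *. set (Y := snd b - snd v) in *.
  assert (HY : 0 <= Y) by (unfold Y; rewrite Ev; simpl; lra).
  pose proof (angle_ineq X Y (cos (3*aa)) (sin (3*aa)) HY T2) as AI.
  assert (Hcs : cos (3*aa) * cos (3*aa) + sin (3*aa) * sin (3*aa) = 1).
  { pose proof (sin2_cos2 (3*aa)). unfold Rsqr in H. lra. }
  specialize (AI Hcs Hf).
  set (d := (s - s') * (2 * sin aa)).
  assert (Hd : 0 < d) by (unfold d; nra).
  assert (Epv : psub p v = (-d, 0)).
  { rewrite Ep, Ev. unfold psub, d; simpl. f_equal; ring. }
  assert (Ebv : psub b v = (X, Y)) by (unfold psub, X, Y; destruct b; reflexivity).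
  rewrite Epv, Ebv. unfold norm, dot; simpl.
  replace (-d*-d + 0*0) with (d*d) by ring. rewrite sqrt_square by lra.
  nra.
Qed.



Definition isframe (F : pt -> pt) (rho : R) : Prop :=
  (forall y z t, F (padd y (pscale t (psub z y))) = padd (F y) (pscale t (psub (F z) (F y)))) /\
  (forall x y z u, dot (psub (F x) (F y)) (psub (F z) (F u)) = rho*rho * dot (psub x y) (psub z u)).

Definition Frot (c : pt) (rho g : R) (q : pt) : pt :=
  (fst c + rho*(cos g * fst q - sin g * snd q), snd c + rho*(sin g * fst q + cos g * snd q)).
Definition Fref (c : pt) (rho g : R) (q : pt) : pt :=
  (fst c + rho*(cos g * fst q + sin g * snd q), snd c + rho*(sin g * fst q - cos g * snd q)).

Lemma cs1 (g : R) : cos g * cos g + sin g * sin g = 1.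
Proof. pose proof (sin2_cos2 g). unfold Rsqr in H. lra. Qed.

Lemma Frot_frame c rho g : isframe (Frot c rho g) rho.
Proof.
  split.
  - intros [] [] t; unfold Frot, padd, pscale, psub; simpl; f_equal; ring.
  - intros [] [] [] []; unfold Frot, dot, psub; simpl.
    pose proof (cs1 g). 
    transitivity (rho*rho*(cos g * cos g + sin g * sin g) * ((r - r1) * (r3 - r5) + (r0 - r2) * (r4 - r6))); [ring|].
    rewrite H; ring.
Qed.

Lemma Fref_frame c rho g : isframe (Fref c rho g) rho.
Proof.
  split.
  - intros [] [] t; unfold Fref, padd, pscale, psub; simpl; f_equal; ring.
  - intros [] [] [] []; unfold Fref, dot, psub; simpl.
    pose proof (cs1 g). 
    transitivity (rho*rho*(cos g * cos g + sin g * sin g) * ((r - r1) * (r3 - r5) + (r0 - r2) * (r4 - r6))); [ring|].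
    rewrite H; ring.
Qed.

Definition RV (c : pt) (rho th x : R) : pt :=
  (fst c + rho * cos (th + 2 * PI * x / INR n), snd c + rho * sin (th + 2 * PI * x / INR n)).

Lemma RV_reg c rho th k : reg_vertex n c rho th k = RV c rho th (INR k).
Proof. reflexivity. Qed.

Lemma INRn_nz : INR n <> 0.
Proof. pose proof INRn_pos. lra. Qed.

Lemma RV_per c rho th x : RV c rho th (x + INR n) = RV c rho th x.
Proof.
  unfold RV. pose proof INRn_nz.
  replace (th + 2 * PI * (x + INR n) / INR n) with (th + 2 * PI * x / INR n + 2 * INR 1 * PI)
    by (simpl; field; auto).
  rewrite cos_period, sin_period. reflexivity.
Qed.

Lemma RV_perq c rho th x q : RV c rho th (x + INR q * INR n) = RV c rho th x.
Proof.
  induction q.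
  - simpl. rewrite Rmult_0_l, Rplus_0_r. reflexivity.
  - rewrite S_INR. replace (x + (INR q + 1) * INR n) with ((x + INR q * INR n) + INR n) by ring.
    rewrite RV_per. auto.
Qed.

Lemma RV_mod c rho th k x : RV c rho th (INR (k mod n) + x) = RV c rho th (INR k + x).
Proof.
  pose proof (Nat.div_mod k n) as E. assert (n <> 0%nat) by lia. specialize (E H).
  rewrite E at 2. rewrite plus_INR, mult_INR.
  replace (INR n * INR (k / n) + INR (k mod n) + x) with ((INR (k mod n) + x) + INR (k/n) * INR n) by ring.
  rewrite RV_perq. auto.
Qed.

Lemma sin_pi2 (x : R) : sin (x + PI/2) = cos x.
Proof. rewrite sin_plus, sin_PI2, cos_PI2. ring. Qed.
Lemma cos_pi2 (x : R) : cos (x + PI/2) = - sin x.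
Proof. rewrite cos_plus, sin_PI2, cos_PI2. ring. Qed.

Lemma Frot_w c rho th (j k : R) :
  Frot c rho (th + (2*j+1)*aa + PI/2) (wloc (2*k-1)) = RV c rho th (j+k).
Proof.
  unfold Frot, wloc, RV; simpl. pose proof INRn_nz.
  set (g := th + (2*j+1)*aa + PI/2). set (X := th + 2 * PI * (j + k) / INR n).
  assert (E : g + (2*k-1)*aa = X + PI/2) by (unfold g, X, aa; field; auto).
  f_equal.
  - f_equal. f_equal. transitivity (sin (g + (2*k-1)*aa)). rewrite sin_plus; ring.
    rewrite E, sin_pi2. reflexivity.
  - f_equal. f_equal. transitivity (- cos (g + (2*k-1)*aa)). rewrite cos_plus; ring.
    rewrite E, cos_pi2. ring.
Qed.

Lemma Fref_w c rho th (j k : R) :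
  Fref c rho (th + (2*j+1)*aa - PI/2) (wloc (2*k-1)) = RV c rho th (j+1-k).
Proof.
  unfold Fref, wloc, RV; simpl. pose proof INRn_nz.
  set (g := th + (2*j+1)*aa - PI/2). set (X := th + 2 * PI * (j + 1 - k) / INR n).
  assert (E : g - (2*k-1)*aa + PI/2 = X) by (unfold g, X, aa; field; auto).
  f_equal.
  - f_equal. f_equal. rewrite <- E. rewrite cos_plus, sin_PI2, cos_PI2, cos_minus, sin_minus. ring.
  - f_equal. f_equal. rewrite <- E. rewrite sin_plus, sin_PI2, cos_PI2, cos_minus, sin_minus. ring.
Qed.

Definition sego (x A B : pt) := on_segment x A B \/ on_segment x B A.

Lemma seg_flip (A B : pt) t : padd A (pscale t (psub B A)) = padd B (pscale (1-t) (psub A B)).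
Proof. destruct A, B; unfold padd, pscale, psub; simpl; f_equal; ring. Qed.

Lemma sego_param x A B : sego x A B -> exists t, 0 <= t <= 1 /\ x = padd A (pscale t (psub B A)).
Proof.
  intros [[t [Ht E]]|[t [Ht E]]].
  - exists t; auto.
  - exists (1-t). split; [lra|]. rewrite E, seg_flip. replace (1 - (1 - t)) with t by ring. reflexivity.
Qed.

Lemma frame_norm F rho x y : isframe F rho -> 0 < rho -> norm (psub (F x) (F y)) = rho * norm (psub x y).
Proof.
  intros [_ Hd] Hr. unfold norm. rewrite Hd. rewrite sqrt_mult_alt by nra.
  rewrite sqrt_square by lra. reflexivity.
Qed.

Lemma transfer F rho (C : R) pl vl bl : isframe F rho -> 0 < rho ->
  dot (psub pl vl) (psub bl vl) < - C * (norm (psub pl vl) * norm (psub bl vl)) ->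
  dot (psub (F pl) (F vl)) (psub (F bl) (F vl)) < - C * (norm (psub (F pl) (F vl)) * norm (psub (F bl) (F vl))).
Proof.
  intros Fr Hr H. rewrite !(frame_norm F rho) by auto. destruct Fr as [_ Hd]. rewrite Hd.
  assert (0 < rho*rho) by nra.
  replace (- C * (rho * norm (psub pl vl) * (rho * norm (psub bl vl)))) with
    (rho*rho * (- C * (norm (psub pl vl) * norm (psub bl vl)))) by ring.
  apply Rmult_lt_compat_l; auto.
Qed.

Lemma chain F rho (Fr : isframe F rho) (Hr : 0 < rho) A0 A1 A2 A3
  (H0 : F (wloc (-1)) = A0) (H1 : F (wloc 1) = A1) (H2 : F (wloc 3) = A2) (H3 : F (wloc 5) = A3)
  (S : list pt) v p sg sg' :
  0 < sg <= 1 -> sg' < sg -> v = padd A0 (pscale sg (psub A1 A0)) -> p = padd A0 (pscale sg' (psub A1 A0)) ->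
  ((exists x y, x <> y /\ In x S /\ In y S /\ sego x A1 A2 /\ sego y A1 A2) \/
   (exists x y, x <> y /\ In x S /\ In y S /\ sego x A2 A3 /\ sego y A2 A3)) ->
  exists b, In b S /\ dot (psub p v) (psub b v) < - cos (3*aa) * (norm (psub p v) * norm (psub b v)).
Proof.
  intros Hs Hs' Ev Ep Hch.
  destruct Fr as [Fa Fd].
  assert (Ev' : v = F (padd (wloc (-1)) (pscale sg (psub (wloc 1) (wloc (-1)))))) by (rewrite Fa, H0, H1; exact Ev).
  assert (Ep' : p = F (padd (wloc (-1)) (pscale sg' (psub (wloc 1) (wloc (-1)))))) by (rewrite Fa, H0, H1; exact Ep).
  assert (G : forall t b, 0 <= t <= 1 ->
     ((b = padd A1 (pscale t (psub A2 A1)) /\ (sg < 1 \/ 0 < t)) \/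
      (b = padd A2 (pscale t (psub A3 A2)) /\ (sg < 1 \/ t < 1))) ->
     dot (psub p v) (psub b v) < - cos (3*aa) * (norm (psub p v) * norm (psub b v))).
  { intros t b Ht Hb.
    destruct Hb as [[Eb Hc]|[Eb Hc]].
    - assert (Eb' : b = F (padd (wloc 1) (pscale t (psub (wloc 3) (wloc 1))))) by (rewrite Fa, H1, H2; exact Eb).
      rewrite Ev', Ep', Eb'. apply transfer with rho; [split; auto|auto|].
      apply core with t; auto.
    - assert (Eb' : b = F (padd (wloc 3) (pscale t (psub (wloc 5) (wloc 3))))) by (rewrite Fa, H2, H3; exact Eb).
      rewrite Ev', Ep', Eb'. apply transfer with rho; [split; auto|auto|].
      apply core with t; auto. }
  destruct Hch as [[x [y [Hxy [Hx [Hy [Sx Sy]]]]]]|[x [y [Hxy [Hx [Hy [Sx Sy]]]]]]].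
  - apply sego_param in Sx as [tx [Htx Ex]]. apply sego_param in Sy as [ty [Hty Ey]].
    destruct (Rlt_le_dec 0 tx).
    + exists x; split; auto. apply (G tx); auto.
    + destruct (Rlt_le_dec 0 ty).
      * exists y; split; auto. apply (G ty); auto.
      * exfalso. apply Hxy. rewrite Ex, Ey. replace tx with 0 by lra. replace ty with 0 by lra. auto.
  - apply sego_param in Sx as [tx [Htx Ex]]. apply sego_param in Sy as [ty [Hty Ey]].
    destruct (Rlt_le_dec tx 1).
    + exists x; split; auto. apply (G tx); auto.
    + destruct (Rlt_le_dec ty 1).
      * exists y; split; auto. apply (G ty); auto.
      * exfalso. apply Hxy. rewrite Ex, Ey. replace tx with 1 by lra. replace ty with 1 by lra. auto.
Qed.


Lemma n_aa : INR n * aa = PI.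
Proof. unfold aa. field. apply INRn_nz. Qed.

Lemma cos_odd (k : nat) : (1 <= k <= 2*n-1)%nat ->
  cos (INR k * aa) <= cos aa /\ ((1 < k < 2*n-1)%nat -> cos (INR k * aa) < cos aa).
Proof.
  intros Hk. destruct aa_bounds as [H1 H2]. pose proof PI_RGT_0.
  assert (Hk1 : 1 <= INR k) by (replace 1 with (INR 1) by reflexivity; apply le_INR; lia).
  assert (Hk2 : INR k <= 2 * INR n - 1).
  { replace (2 * INR n - 1) with (INR (2*n-1)). apply le_INR; lia.
    rewrite minus_INR by lia. rewrite mult_INR. simpl. lra. }
  pose proof n_aa.
  assert (Ex : aa <= INR k * aa <= 2*PI - aa) by nra.
  destruct (Rle_dec (INR k * aa) PI).
  - split.
    + destruct (Req_dec (INR k) 1) as [E1|E1]. rewrite E1, Rmult_1_l; lra. left; apply cos_decreasing_1; nra.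
    + intros Hs. assert (1 < INR k) by (replace 1 with (INR 1) by reflexivity; apply lt_INR; lia).
      apply cos_decreasing_1; nra.
  - rewrite <- (cos_neg (INR k * aa)).
    replace (- (INR k * aa)) with ((2*PI - INR k * aa) + 2 * INR 1 * (-PI)) by (simpl; ring).
    assert (Hc : forall y, cos (y + 2 * INR 1 * (-PI)) = cos y).
    { intros y. simpl. replace (y + 2 * 1 * -PI) with (y - 2*PI) by ring.
      rewrite cos_minus, cos_2PI, sin_2PI. ring. }
    rewrite Hc. split.
    + destruct (Req_dec (INR k) (2*INR n - 1)).
      * replace (2 * PI - INR k * aa) with aa by nra. lra.
      * left; apply cos_decreasing_1; nra.
    + intros Hs. assert (INR k < 2*INR n - 1).
      { replace (2 * INR n - 1) with (INR (2*n-1)). apply lt_INR; lia.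
        rewrite minus_INR by lia. rewrite mult_INR. simpl. lra. }
      apply cos_decreasing_1; nra.
Qed.

Lemma cos_A (i j : nat) : (i < n)%nat -> (j < n)%nat -> i <> j ->
  cos ((2*(INR i - INR j) - 1) * aa) <= cos aa /\
  (~ (i = S j \/ (i = 0 /\ j = n-1))%nat -> cos ((2*(INR i - INR j) - 1) * aa) < cos aa).
Proof.
  intros Hi Hj Hij. destruct (Nat.lt_ge_cases j i).
  - set (d := (i - j - 1)%nat). assert (Ei : i = (j + d + 1)%nat) by (unfold d; lia).
    assert (E : (2*(INR i - INR j) - 1) = INR (2*d+1)).
    { rewrite Ei, !plus_INR, mult_INR. simpl. ring. }
    rewrite E. destruct (cos_odd (2*d+1)) as [A B]; [lia|]. split; auto.
    intros Hn'. apply B. lia.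
  - set (d := (j - i)%nat). assert (Ej : j = (i + d)%nat) by (unfold d; lia).
    assert (E : (2*(INR i - INR j) - 1) = - INR (2*d+1)).
    { rewrite Ej, !plus_INR, mult_INR. simpl. ring. }
    rewrite E, Ropp_mult_distr_l_reverse, cos_neg. destruct (cos_odd (2*d+1)) as [A B]; [lia|]. split; auto.
    intros Hn'. apply B. lia.
Qed.

Lemma cos_B (i j : nat) : (i < n)%nat -> (j < n)%nat -> i <> j ->
  cos ((2*(INR i - INR j) + 1) * aa) <= cos aa.
Proof.
  intros Hi Hj Hij. destruct (Nat.lt_ge_cases j i).
  - set (d := (i - j - 1)%nat). assert (Ei : i = (j + d + 1)%nat) by (unfold d; lia).
    assert (E : (2*(INR i - INR j) + 1) = INR (2*d+3)).
    { rewrite Ei, !plus_INR, mult_INR. simpl. ring. }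
    rewrite E. destruct (cos_odd (2*d+3)) as [A B]; [lia|]. auto.
  - set (d := (j - i - 1)%nat). assert (Ej : j = (i + d + 1)%nat) by (unfold d; lia).
    assert (E : (2*(INR i - INR j) + 1) = - INR (2*d+1)).
    { rewrite Ej, !plus_INR, mult_INR. simpl. ring. }
    rewrite E, Ropp_mult_distr_l_reverse, cos_neg. destruct (cos_odd (2*d+1)) as [A B]; [lia|]. auto.
Qed.

Lemma key_eq (i j : nat) (t : R) : (i < n)%nat -> (j < n)%nat -> i <> j -> 0 <= t < 1 ->
  (1 - t) * cos ((2*(INR i - INR j) - 1) * aa) + t * cos ((2*(INR i - INR j) + 1) * aa) = cos aa ->
  (i = S j \/ (i = 0 /\ j = n-1))%nat.
Proof.
  intros Hi Hj Hij Ht E.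
  destruct (cos_A i j Hi Hj Hij) as [A1 A2]. pose proof (cos_B i j Hi Hj Hij) as B1.
  destruct (Classical_Prop.classic (i = S j \/ (i = 0 /\ j = n-1))%nat) as [H|H]; auto.
  specialize (A2 H). exfalso. nra.
Qed.

Section Poly.
Variable c : pt.
Variable rho th : R.
Hypothesis Hrho : 0 < rho.

Definition V k := reg_vertex n c rho th k.
Definition HO k x := exists t, 0 <= t < 1 /\ x = padd (V k) (pscale t (psub (V (k+1)) (V k))).
Definition Mv (m : nat) : pt := (cos (th + (2*INR m + 1)*aa), sin (th + (2*INR m + 1)*aa)).

Lemma lV (k m : nat) : dot (psub (V k) c) (Mv m) = rho * cos ((2*(INR k - INR m) - 1) * aa).
Proof.
  unfold V, reg_vertex, Mv, dot, psub; simpl.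
  replace ((2*(INR k - INR m) - 1) * aa) with ((th + 2 * PI * INR k / INR n) - (th + (2*INR m + 1)*aa)).
  rewrite cos_minus. ring.
  unfold aa. field. apply INRn_nz.
Qed.

Lemma lseg (A B : pt) t m : dot (psub (padd A (pscale t (psub B A))) c) (Mv m) =
  (1 - t) * dot (psub A c) (Mv m) + t * dot (psub B c) (Mv m).
Proof. destruct A, B; unfold dot, psub, padd, pscale; simpl; ring. Qed.

Lemma HO_l (i j : nat) x t : x = padd (V i) (pscale t (psub (V (i+1)) (V i))) ->
  dot (psub x c) (Mv j) = rho * ((1 - t) * cos ((2*(INR i - INR j) - 1) * aa) + t * cos ((2*(INR i - INR j) + 1) * aa)).
Proof.
  intros ->. rewrite lseg, !lV. rewrite plus_INR. simpl.
  replace (2 * (INR i + 1 - INR j) - 1) with (2*(INR i - INR j) + 1) by ring. ring.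
Qed.

Lemma HO_disj (i j : nat) x : (i < n)%nat -> (j < n)%nat -> i <> j -> HO i x -> HO j x -> False.
Proof.
  intros Hi Hj Hij [t [Ht Ex]] [t' [Ht' Ex']].
  assert (K1 : (i = S j \/ (i = 0 /\ j = n-1))%nat).
  { apply (key_eq i j t); auto.
    pose proof (HO_l i j x t Ex) as L1. pose proof (HO_l j j x t' Ex') as L2.
    rewrite L1 in L2. replace (INR j - INR j) with 0 in L2 by ring.
    replace ((2*0-1)*aa) with (-aa) in L2 by ring. replace ((2*0+1)*aa) with aa in L2 by ring.
    rewrite cos_neg in L2. apply Rmult_eq_reg_l with rho; [|lra]. rewrite L2. ring. }
  assert (K2 : (j = S i \/ (j = 0 /\ i = n-1))%nat).
  { apply (key_eq j i t'); auto.
    pose proof (HO_l j i x t' Ex') as L1. pose proof (HO_l i i x t Ex) as L2.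
    rewrite L1 in L2. replace (INR i - INR i) with 0 in L2 by ring.
    replace ((2*0-1)*aa) with (-aa) in L2 by ring. replace ((2*0+1)*aa) with aa in L2 by ring.
    rewrite cos_neg in L2. apply Rmult_eq_reg_l with rho; [|lra]. rewrite L2. ring. }
  lia.
Qed.

Lemma seg1 (A B : pt) : padd A (pscale 1 (psub B A)) = B.
Proof. destruct A, B; unfold padd, pscale, psub; simpl; f_equal; ring. Qed.
Lemma seg0 (A B : pt) : padd A (pscale 0 (psub B A)) = A.
Proof. destruct A, B; unfold padd, pscale, psub; simpl; f_equal; ring. Qed.

Lemma V_per k : V (k + n) = V k.
Proof. unfold V. rewrite !RV_reg, plus_INR. rewrite RV_per. reflexivity. Qed.

Definition pred' k := if Nat.eqb k 0 then (n-1)%nat else (k-1)%nat.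
Lemma pred'_lt k : (k < n)%nat -> (pred' k < n)%nat.
Proof. unfold pred'. destruct (Nat.eqb_spec k 0); lia. Qed.
Lemma pred'_V k : (k < n)%nat -> V (pred' k + 1) = V k.
Proof.
  intros. unfold pred'. destruct (Nat.eqb_spec k 0).
  - subst. replace (n - 1 + 1)%nat with (0 + n)%nat by lia. apply V_per.
  - f_equal; lia.
Qed.
Lemma pred'_inj i j : (i < n)%nat -> (j < n)%nat -> pred' i = pred' j -> i = j.
Proof. unfold pred'. destruct (Nat.eqb_spec i 0), (Nat.eqb_spec j 0); lia. Qed.

Variable S : list pt.
Definition T k := seg_has_exactly_two S (V k) (V (k+1)).

Lemma T_n : T n -> T 0.
Proof.
  unfold T. replace n with (0 + n)%nat at 1 by lia. rewrite V_per.
  replace (n + 1)%nat with (1 + n)%nat by lia. rewrite V_per. auto.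
Qed.

Lemma count (v : pt) : NoDup S -> length S = n -> (forall k, (k < n)%nat -> T k \/ T (k+1)) -> In v S ->
  exists j, (j < n)%nat /\ T j /\ on_segment v (V j) (V (j+1)).
Proof.
  intros HS HL Hk Hv.
  destruct (classic (exists j, (j < n)%nat /\ T j /\ on_segment v (V j) (V (j+1)))) as [H|Hno]; auto.
  exfalso.
  assert (Hno' : forall j x, (j < n)%nat -> T j -> on_segment x (V j) (V (j+1)) -> x <> v).
  { intros j x Hj Tj Sx ->. apply Hno. exists j; auto. }
  assert (Hpred : forall k, (k < n)%nat -> ~ T k -> T (pred' k)).
  { intros k Hkn HT. destruct (Hk (pred' k) (pred'_lt k Hkn)) as [H|H]; auto.
    exfalso. apply HT. unfold pred' in H. destruct (Nat.eqb_spec k 0).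
    - subst. replace (n - 1 + 1)%nat with n in H by lia. apply T_n; auto.
    - replace (k - 1 + 1)%nat with k in H by lia. auto. }
  assert (Hpq : forall k, exists z : pt * pt, T k ->
     fst z <> snd z /\ In (fst z) S /\ In (snd z) S /\
     on_segment (fst z) (V k) (V (k+1)) /\ on_segment (snd z) (V k) (V (k+1))).
  { intros k. destruct (classic (T k)) as [Tk|Tk].
    - destruct Tk as [p [q [H1 [H2 [H3 [H4 [H5 _]]]]]]]. exists (p, q); simpl; auto.
    - exists ((0,0),(0,0)); intros; contradiction. }
  destruct (choice _ Hpq) as [pq Hpq'].
  set (Q := fun k x => In x S /\ x <> v /\
     ((HO k x /\ (T k -> ~ In (V (k+1)) S -> x = fst (pq k))) \/
      (HO (pred' k) x /\ T (pred' k) /\ ~ In (V k) S /\ x = snd (pq (pred' k))))).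
  assert (HQ : forall k, exists x, (k < n)%nat -> Q k x).
  { intros k. destruct (Nat.le_gt_cases n k) as [Hkn|Hkn].
    { exists (0,0). intros; lia. }
    destruct (classic (T k)) as [Tk|Tk].
    - destruct (Hpq' k Tk) as [D [I1 [I2 [S1 S2]]]].
      set (p := fst (pq k)) in *. set (q := snd (pq k)) in *.
      assert (HOp : p <> V (k+1) -> HO k p).
      { intros Hne. destruct S1 as [t [Ht E]]. exists t. split; auto.
        destruct (Req_dec t 1); [|lra]. subst t. rewrite seg1 in E. contradiction. }
      assert (HOq : q <> V (k+1) -> HO k q).
      { intros Hne. destruct S2 as [t [Ht E]]. exists t. split; auto.
        destruct (Req_dec t 1); [|lra]. subst t. rewrite seg1 in E. contradiction. }
      destruct (classic (In (V (k+1)) S)) as [Iv|Iv].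
      + destruct (classic (p = V (k+1))) as [Ep|Ep].
        * exists q. intros _. split; auto. split. apply (Hno' k); auto.
          left. split; [apply HOq; congruence|]. intros _ F; contradiction.
        * exists p. intros _. split; auto. split. apply (Hno' k); auto.
          left. split; auto.
      + exists p. intros _. split; auto. split. apply (Hno' k); auto.
        left. split; [apply HOp; intro E; apply Iv; rewrite <- E; auto|]. auto.
    - assert (Tp := Hpred k Hkn Tk).
      destruct (classic (In (V k) S)) as [Iv|Iv].
      + exists (V k). intros _. split; auto. split.
        * apply (Hno' (pred' k)); auto. apply pred'_lt; auto.
          rewrite pred'_V by auto. exists 1. split; [lra|]. rewrite seg1. reflexivity.
        * left. split; [|intros; contradiction]. exists 0. split; [lra|]. rewrite seg0. reflexivity.
      + destruct (Hpq' (pred' k) Tp) as [D [I1 [I2 [S1 S2]]]].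
        exists (snd (pq (pred' k))). intros _. split; auto. split.
        * apply (Hno' (pred' k)); auto. apply pred'_lt; auto.
        * right. split; [|auto]. destruct S2 as [t [Ht E]]. exists t. split; auto.
          destruct (Req_dec t 1); [|lra]. subst t. rewrite seg1 in E. rewrite pred'_V in E by auto.
          exfalso. apply Iv. rewrite <- E. auto. }
  destruct (choice _ HQ) as [f Hf].
  assert (Hinj : forall i j, (i < n)%nat -> (j < n)%nat -> f i = f j -> i = j).
  { intros i j Hi Hj E.
    destruct (Nat.eq_dec i j) as [|Hij]; auto. exfalso.
    destruct (Hf i Hi) as [_ [_ Qi]]. destruct (Hf j Hj) as [_ [_ Qj]].
    rewrite <- E in Qj.
    destruct Qi as [[Hi1 Hi2]|[Hi1 [Hi2 [Hi3 Hi4]]]]; destruct Qj as [[Hj1 Hj2]|[Hj1 [Hj2 [Hj3 Hj4]]]].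
    - apply (HO_disj i j (f i)); auto.
    - assert (i = pred' j).
      { destruct (Nat.eq_dec i (pred' j)); auto. exfalso. apply (HO_disj i (pred' j) (f i)); auto. apply pred'_lt; auto. }
      subst i. rewrite pred'_V in Hi2 by auto. specialize (Hi2 Hj2 Hj3).
      destruct (Hpq' (pred' j) Hj2) as [D _]. apply D. rewrite <- Hi2, <- Hj4. reflexivity.
    - assert (j = pred' i).
      { destruct (Nat.eq_dec j (pred' i)); auto. exfalso. apply (HO_disj j (pred' i) (f i)); auto. apply pred'_lt; auto. }
      subst j. rewrite pred'_V in Hj2 by auto. specialize (Hj2 Hi2 Hi3).
      destruct (Hpq' (pred' i) Hi2) as [D _]. apply D. rewrite <- Hj2, <- Hi4. reflexivity.
    - apply Hij. apply pred'_inj; auto.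
      destruct (Nat.eq_dec (pred' i) (pred' j)); auto. exfalso.
      apply (HO_disj (pred' i) (pred' j) (f i)); auto; apply pred'_lt; auto. }
  assert (ND : NoDup (v :: map f (seq 0 n))).
  { constructor.
    - intros Hin. apply in_map_iff in Hin as [k [Ek Hk']]. apply in_seq in Hk'.
      destruct (Hf k ltac:(lia)) as [_ [Ne _]]. auto.
    - apply NoDup_map_NoDup_ForallPairs; [|apply seq_NoDup].
      intros a b Ha Hb. apply in_seq in Ha. apply in_seq in Hb. apply Hinj; lia. }
  assert (Inc : incl (v :: map f (seq 0 n)) S).
  { intros x [<-|Hx]; auto. apply in_map_iff in Hx as [k [<- Hk']]. apply in_seq in Hk'.
    destruct (Hf k ltac:(lia)); auto. }
  pose proof (NoDup_incl_length ND Inc). simpl in H. rewrite length_map, length_seq in H. lia.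
Qed.
End Poly.
End Frame.

Lemma RVx_eq n c rho th x y : x = y -> RV n c rho th x = RV n c rho th y.
Proof. intros ->; reflexivity. Qed.

Theorem lemma5p10 (n : nat) (S : list pt)
  (HS : NoDup S) (Hn : length S = n) (Hn4 : (4 < n)%nat)
  (Hcenter : forall c r, is_SED S c r -> ~ In c S)
  (Hpre : pre_regular n S) :
  forall u v w, hull_adjacent S u v -> hull_adjacent S v w -> u <> w ->
    PI * (INR n - 3) / INR n < angle u v w.
Proof.
  intros u v w Huv Hvw Huw.
  destruct Hpre as [c [rho [th [Hrho Hk]]]].
  assert (Hk' : forall k, (k < n)%nat -> T n c rho th S k \/ T n c rho th S (k+1)).
  { intros k Hkn. destruct (Hk k Hkn) as [[H _]|[H _]]; [left|right]; unfold T, V; auto.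
    replace (k + 1 + 1)%nat with (k + 2)%nat by lia. auto. }
  assert (Hv : In v S) by (destruct Huv as [_ [[Hv _] _]]; auto).
  destruct (count n Hn4 c rho th Hrho S v HS Hn Hk' Hv) as [j [Hj [Tj Sv]]].
  assert (Hpart : exists p, p <> v /\ In p S /\ on_segment p (V n c rho th j) (V n c rho th (j+1))).
  { destruct Tj as [p [q [D [Ip [Iq [Sp [Sq Ex]]]]]]].
    destruct (Ex v Hv Sv) as [->| ->]; [exists q | exists p]; auto. }
  destruct Hpart as [p [Hpv [Hp Sp]]].
  destruct Sv as [s [Hs Ev]]. destruct Sp as [s' [Hs' Ep]].
  pose proof (aa_bounds n Hn4) as [Ha1 Ha2].
  assert (Hss : s <> s') by (intros ->; apply Hpv; congruence).
  assert (Main : exists b, In b S /\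
     dot (psub p v) (psub b v) < - cos (3 * aa n) * (norm (psub p v) * norm (psub b v))).
  { destruct (Rlt_le_dec s' s) as [Hlt|Hle].
    -
      set (F := Frot c rho (th + (2 * INR j + 1) * aa n + PI / 2)).
      assert (FW : forall k, F (wloc n (2*k-1)) = RV n c rho th (INR j + k))
        by (intros; unfold F; apply Frot_w; auto).
      set (m := ((j + 1) mod n)%nat).
      assert (Vm : forall i, V n c rho th (m + i) = RV n c rho th (INR j + 1 + INR i)).
      { intros i. unfold V. rewrite RV_reg, plus_INR. unfold m. rewrite RV_mod by auto.
        apply RVx_eq. rewrite plus_INR. simpl. ring. }
      apply (chain n Hn4 F rho (Frot_frame _ _ _) Hrho
              (RV n c rho th (INR j + 0)) (RV n c rho th (INR j + 1))
              (RV n c rho th (INR j + 2)) (RV n c rho th (INR j + 3))) with (sg := s) (sg' := s').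
      + replace (-1) with (2*0-1) by ring. apply FW.
      + replace 1 with (2*1-1) at 1 by ring. apply FW.
      + replace 3 with (2*2-1) at 1 by ring. apply FW.
      + replace 5 with (2*3-1) by ring. apply FW.
      + assert (s <> 0) by (intro; subst; lra). lra.
      + auto.
      + rewrite Ev. unfold V. rewrite !RV_reg. replace (INR j + 0) with (INR j) by ring.
        replace (INR j + 1) with (INR (j+1)) by (rewrite plus_INR; reflexivity). reflexivity.
      + rewrite Ep. unfold V. rewrite !RV_reg. replace (INR j + 0) with (INR j) by ring.
        replace (INR j + 1) with (INR (j+1)) by (rewrite plus_INR; reflexivity). reflexivity.
      + assert (E1 : V n c rho th (m + 0) = RV n c rho th (INR j + 1)) by (rewrite Vm; apply RVx_eq; simpl; ring).
        assert (E2 : V n c rho th (m + 1) = RV n c rho th (INR j + 2)) by (rewrite Vm; apply RVx_eq; simpl; ring).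
        assert (E3 : V n c rho th (m + 2) = RV n c rho th (INR j + 3)) by (rewrite Vm; apply RVx_eq; simpl; ring).
        rewrite Nat.add_0_r in E1.
        assert (Hm : (m < n)%nat) by (unfold m; apply Nat.mod_upper_bound; lia).
        destruct (Hk' m Hm) as [Tm|Tm]; [left|right];
          destruct Tm as [x [y [D [Ix [Iy [Sx [Sy _]]]]]]]; exists x, y; repeat split; auto.
        * left. rewrite <- E1, <- E2. auto.
        * left. rewrite <- E1, <- E2. auto.
        * left. rewrite <- E2, <- E3. replace (m + 2)%nat with (m + 1 + 1)%nat by lia. auto.
        * left. rewrite <- E2, <- E3. replace (m + 2)%nat with (m + 1 + 1)%nat by lia. auto.
    -
      assert (Hlt : s < s') by lra.
      set (F := Fref c rho (th + (2 * INR j + 1) * aa n - PI / 2)).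
      assert (FW : forall k, F (wloc n (2*k-1)) = RV n c rho th (INR j + 1 - k))
        by (intros; unfold F; apply Fref_w; auto).
      set (m := ((j + n - 2) mod n)%nat).
      assert (Vm : forall i, V n c rho th (m + i) = RV n c rho th (INR j - 2 + INR i)).
      { intros i. unfold V. rewrite RV_reg, plus_INR. unfold m. rewrite RV_mod by auto.
        rewrite minus_INR by lia. rewrite plus_INR.
        replace (INR j + INR n - INR 2 + INR i) with ((INR j - 2 + INR i) + INR n) by (simpl; ring).
        apply RV_per; auto. }
      apply (chain n Hn4 F rho (Fref_frame _ _ _) Hrho
              (RV n c rho th (INR j + 1 - 0)) (RV n c rho th (INR j + 1 - 1))
              (RV n c rho th (INR j + 1 - 2)) (RV n c rho th (INR j + 1 - 3))) with (sg := 1 - s) (sg' := 1 - s').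
      + replace (-1) with (2*0-1) by ring. apply FW.
      + replace 1 with (2*1-1) at 1 by ring. apply FW.
      + replace 3 with (2*2-1) at 1 by ring. apply FW.
      + replace 5 with (2*3-1) by ring. apply FW.
      + lra.
      + lra.
      + rewrite Ev, seg_flip. unfold V. rewrite !RV_reg. replace (INR j + 1 - 1) with (INR j) by ring.
        replace (INR j + 1 - 0) with (INR (j+1)) by (rewrite plus_INR; simpl; ring). reflexivity.
      + rewrite Ep, seg_flip. unfold V. rewrite !RV_reg. replace (INR j + 1 - 1) with (INR j) by ring.
        replace (INR j + 1 - 0) with (INR (j+1)) by (rewrite plus_INR; simpl; ring). reflexivity.
      + assert (E1 : V n c rho th (m + 0) = RV n c rho th (INR j + 1 - 3)) by (rewrite Vm; apply RVx_eq; simpl; ring).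
        assert (E2 : V n c rho th (m + 1) = RV n c rho th (INR j + 1 - 2)) by (rewrite Vm; apply RVx_eq; simpl; ring).
        assert (E3 : V n c rho th (m + 2) = RV n c rho th (INR j + 1 - 1)) by (rewrite Vm; apply RVx_eq; simpl; ring).
        rewrite Nat.add_0_r in E1.
        assert (Hm : (m < n)%nat) by (unfold m; apply Nat.mod_upper_bound; lia).
        destruct (Hk' m Hm) as [Tm|Tm]; [right|left];
          destruct Tm as [x [y [D [Ix [Iy [Sx [Sy _]]]]]]]; exists x, y; repeat split; auto.
        * right. rewrite <- E1, <- E2. auto.
        * right. rewrite <- E1, <- E2. auto.
        * right. rewrite <- E2, <- E3. replace (m + 2)%nat with (m + 1 + 1)%nat by lia. auto.
        * right. rewrite <- E2, <- E3. replace (m + 2)%nat with (m + 1 + 1)%nat by lia. auto. }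
  destruct Main as [b [Hb Ineq]].
  pose proof (wedge S u v w p b Huv Hvw Huw Hp Hb) as Wd.
  assert (Hu0 : psub u v <> (0,0)) by (apply psub_neq; destruct Huv as [_ [_ [H _]]]; auto).
  assert (Hw0 : psub w v <> (0,0)) by (apply psub_neq; destruct Hvw as [_ [_ [H _]]]; auto).
  pose proof (combine _ _ _ _ _ Hu0 Hw0 Wd Ineq) as Cb.
  unfold angle.
  replace (PI * (INR n - 3) / INR n) with (PI - 3 * aa n).
  2:{ unfold aa. field. apply (INRn_nz n Hn4). }
  apply acos_gt.
  - pose proof PI_RGT_0. lra.
  - replace (cos (PI - 3 * aa n)) with (- cos (3 * aa n)); auto.
    rewrite cos_minus, cos_PI, sin_PI. ring.
Qed.
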